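(* For $n=0,1,2,\ldots$ let $R_n=\sum_{k=0}^n\binom{n}{k}\binom{n+k}{k}\frac{1}{2k-1}$. Then $\lim_{n\to\infty}\frac{R_{n+1}}{R_n}=3+2\sqrt{2}$. *)

(* Defs.v *)
From Stdlib Require Import Reals.
From Coquelicot Require Import Coquelicot.
Open Scope R_scope.

(* R_n = sum_{k=0}^n C(n,k) C(n+k,k) / (2k-1), computed in the reals
   (so the k = 0 term is -1). *)
Definition Rseq (n : nat) : R :=
  sum_f_R0 (fun k => Binomial.C n k * Binomial.C (n + k) k / (2 * INR k - 1)) n.

(* Main.v *)
Require Import Defs.
From Stdlib Require Import Reals Lra Lia Factorial Arith.
From Coquelicot Require Import Coquelicot.
Open Scope R_scope.

Definition T (n k : nat) : R :=
  if Nat.leb k n then INR (fact (n+k)) / (INR (fact k) ^ 2 * INR (fact (n-k))) else 0.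

Lemma Tin n k : (k <= n)%nat -> T n k = INR (fact (n+k)) / (INR (fact k) ^ 2 * INR (fact (n-k))).
Proof. intro H. unfold T. replace (Nat.leb k n) with true; [reflexivity|]. symmetry; apply Nat.leb_le; lia. Qed.

Lemma Tout n k : (n < k)%nat -> T n k = 0.
Proof. intro H. unfold T. replace (Nat.leb k n) with false; [reflexivity|]. symmetry; apply Nat.leb_gt; lia. Qed.

Lemma fS m : INR (fact (S m)) = INR (S m) * INR (fact m).
Proof. rewrite fact_simpl, mult_INR. reflexivity. Qed.

Lemma factpos m : 0 < INR (fact m).
Proof. apply lt_0_INR, lt_O_fact. Qed.

Lemma CC n k : (k <= n)%nat -> Binomial.C n k * Binomial.C (n+k) k = T n k.
Proof.
  intro H. rewrite Tin by lia. unfold Binomial.C.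
  replace (n + k - k)%nat with n by lia.
  pose proof (INR_fact_neq_0 n). pose proof (INR_fact_neq_0 k).
  pose proof (INR_fact_neq_0 (n-k)). field. auto.
Qed.

Lemma T_pos n k : (k <= n)%nat -> 0 < T n k.
Proof.
  intro H. rewrite Tin by lia. pose proof (factpos (n+k)). pose proof (factpos k).
  pose proof (factpos (n-k)). apply Rdiv_lt_0_compat; auto.
  apply Rmult_lt_0_compat; auto. apply pow_lt; auto.
Qed.

Lemma T0 n : T n 0 = 1.
Proof. rewrite Tin by lia. rewrite Nat.add_0_r, Nat.sub_0_r. simpl.
  pose proof (INR_fact_neq_0 n). field. auto. Qed.

Lemma Ta n k : (k <= n)%nat -> INR (S n - k) * T (S n) k = INR (S n + k) * T n k.
Proof.
  intro H. rewrite !Tin by lia.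
  replace (S n - k)%nat with (S (n - k)) by lia.
  replace (S n + k)%nat with (S (n + k)) by lia.
  rewrite !fS.
  pose proof (factpos (n+k)). pose proof (factpos k).
  pose proof (factpos (n-k)). pose proof (pos_INR (n-k)). rewrite S_INR.
  field. lra.
Qed.

Ltac nz := repeat match goal with |- _ /\ _ => split end;
  try apply INR_fact_neq_0; try (apply Rgt_not_eq; lra); try lra.

Lemma Tb n k : INR (n+2) * T (n+2) (S k) + INR (n+1) * T n (S k)
  = INR (2*n+3) * T (n+1) (S k) + 2 * INR (2*n+3) * T (n+1) k.
Proof.
  destruct (le_lt_dec (S k) n) as [H|H].
  - assert (exists m, n = (S k + m)%nat) as [m ->] by (exists (n - S k)%nat; lia).
    rewrite !Tin by lia.
    replace (S k + m + 2 + S k)%nat with (S (S (2*k+m+2)))%nat by lia.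
    replace (S k + m + S k)%nat with (2*k+m+2)%nat by lia.
    replace (S k + m + 1 + S k)%nat with (S (2*k+m+2))%nat by lia.
    replace (S k + m + 1 + k)%nat with (2*k+m+2)%nat by lia.
    replace (S k + m + 2 - S k)%nat with (S (S m))%nat by lia.
    replace (S k + m - S k)%nat with m by lia.
    replace (S k + m + 1 - S k)%nat with (S m) by lia.
    replace (S k + m + 1 - k)%nat with (S (S m)) by lia.
    rewrite !fS.
    pose proof (factpos (2*k+m+2)). pose proof (factpos k). pose proof (factpos m).
    pose proof (pos_INR k). pose proof (pos_INR m). pose proof (pos_INR (2*k+m+2)).
    rewrite !S_INR, !plus_INR, !mult_INR. simpl (INR 2). simpl (INR 3). simpl (INR 1).
    rewrite !plus_INR, !mult_INR in *. simpl (INR 2) in *.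
    rewrite !S_INR. field. nz.
  - destruct (Nat.eq_dec k n) as [->|Hk].
    + rewrite (Tout n (S n)) by lia. rewrite !Tin by lia.
      replace (n + 2 + S n)%nat with (S (S (S (2*n))))%nat by lia.
      replace (n + 1 + S n)%nat with (S (S (2*n)))%nat by lia.
      replace (n + 1 + n)%nat with (S (2*n))%nat by lia.
      replace (n + 2 - S n)%nat with 1%nat by lia.
      replace (n + 1 - S n)%nat with 0%nat by lia.
      replace (n + 1 - n)%nat with 1%nat by lia.
      rewrite !fS. simpl (fact 1). simpl (fact 0).
      pose proof (factpos (2*n)). pose proof (factpos n). pose proof (pos_INR n).
      rewrite !S_INR, !plus_INR, !mult_INR. simpl (INR 2). simpl (INR 3). simpl (INR 1).
      repeat rewrite ?S_INR, ?plus_INR, ?mult_INR, ?INR_0; field. nz.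
    + destruct (Nat.eq_dec k (S n)) as [->|Hk2].
      * rewrite (Tout n), (Tout (n+1) (S (S n))) by lia. rewrite !Tin by lia.
        replace (n + 2 + S (S n))%nat with (S (S (S (S (2*n)))))%nat by lia.
        replace (n + 1 + S n)%nat with (S (S (2*n)))%nat by lia.
        replace (n + 2 - S (S n))%nat with 0%nat by lia.
        replace (n + 1 - S n)%nat with 0%nat by lia.
        rewrite !fS. simpl (fact 0).
        pose proof (factpos (2*n)). pose proof (factpos n). pose proof (pos_INR n).
        rewrite !S_INR, !plus_INR, !mult_INR. simpl (INR 2). simpl (INR 3). simpl (INR 1).
        repeat rewrite ?S_INR, ?plus_INR, ?mult_INR, ?INR_0; field. nz.
      * rewrite !Tout by lia. ring.
Qed.

Definition Dd n := sum_f_R0 (T n) n.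

Lemma Dext n N : (n <= N)%nat -> sum_f_R0 (T n) N = Dd n.
Proof.
  intro H. induction H. reflexivity.
  rewrite tech5, IHle, Tout by lia. ring.
Qed.

Lemma Rseq_T n : Rseq n = sum_f_R0 (fun k => T n k / (2*INR k - 1)) n.
Proof. unfold Rseq. apply sum_eq. intros i Hi. rewrite CC by lia. reflexivity. Qed.

Lemma den_nz k : 2 * INR k - 1 <> 0.
Proof.
  destruct k. simpl. lra. rewrite S_INR. pose proof (pos_INR k). lra.
Qed.

Lemma Rrel n : (2*INR n+1) * Rseq (S n) = (2*INR n+3)*Rseq n + Dd (S n) + Dd n.
Proof.
  rewrite !Rseq_T. unfold Dd. rewrite !tech5.
  rewrite Rmult_plus_distr_l, !scal_sum.
  assert (E : sum_f_R0 (fun i => T (S n) i / (2 * INR i - 1) * (2 * INR n + 1)) n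
     = sum_f_R0 (fun i => T n i / (2 * INR i - 1) * (2 * INR n + 3) + (T (S n) i + T n i)) n).
  { apply sum_eq. intros i Hi. pose proof (Ta n i Hi) as HA.
    replace (S n - i)%nat with (S (n - i)) in HA by lia.
    rewrite S_INR, minus_INR, plus_INR, S_INR in HA by lia.
    pose proof (den_nz i). field_simplify; auto. apply Rmult_eq_reg_r with (2 * INR i - 1); auto.
    field_simplify; auto. nra. }
  rewrite E, !plus_sum.
  rewrite S_INR. field. pose proof (pos_INR n). lra.
Qed.

Lemma Drec n : INR (S (S n)) * Dd (S (S n)) + INR (S n) * Dd n = 3 * (2*INR n + 3) * Dd (S n).
Proof.
  rewrite <- (Dext (S n) (S (S n))) by lia.
  rewrite <- (Dext n (S (S n))) by lia. unfold Dd.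
  rewrite !scal_sum, <- plus_sum.
  rewrite decomp_sum by lia. rewrite (decomp_sum (fun i => T (S n) i * (3 * (2 * INR n + 3)))) by lia.
  simpl pred. rewrite !T0.
  assert (E : sum_f_R0 (fun i => T (S (S n)) (S i) * INR (S (S n)) + T n (S i) * INR (S n)) (S n)
    = sum_f_R0 (fun i => (2*INR n+3) * T (S n) (S i) + 2 * (2*INR n+3) * T (S n) i) (S n)).
  { apply sum_eq. intros i _. pose proof (Tb n i) as H.
    replace (n+2)%nat with (S (S n)) in H by lia. replace (n+1)%nat with (S n) in H by lia.
    rewrite !S_INR. rewrite !S_INR, plus_INR, mult_INR in H. simpl (INR 2) in H. simpl (INR 3) in H.
    lra. }
  rewrite E, plus_sum.
  rewrite (sum_eq (fun i => (2*INR n+3)*T (S n) (S i)) (fun i => T (S n) (S i) * (2*INR n+3))) by (intros; ring).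
  rewrite (sum_eq (fun i => 2*(2*INR n+3)*T (S n) i) (fun i => T (S n) i * (2*(2*INR n+3)))) by (intros; ring).
  rewrite <- !scal_sum.
  assert (E2 : sum_f_R0 (fun i => T (S n) (S i)) (S n) = sum_f_R0 (T (S n)) (S (S n)) - T (S n) 0).
  { rewrite (decomp_sum (T (S n)) (S (S n))) by lia. simpl pred. ring. }
  rewrite E2, (Dext (S n) (S (S n))) by lia. fold (Dd (S n)). rewrite T0, !S_INR. ring.
Qed.

Lemma contr (x d : nat -> R) (l c : R) (N : nat) :
  0 <= c < 1 ->
  (forall n, (N <= n)%nat -> Rabs (x (S n) - l) <= c * Rabs (x n - l) + d n) ->
  is_lim_seq d 0 -> is_lim_seq x l.
Proof.
  intros Hc Hrec Hd. apply is_lim_seq_Reals. apply is_lim_seq_Reals in Hd.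
  intros eps Heps.
  destruct (Hd (eps * (1 - c) / 2)) as [M0 HM0].
  { apply Rmult_lt_0_compat; [|lra]. apply Rmult_lt_0_compat; lra. }
  set (M := max N M0).
  set (E := Rabs (x M - l)).
  assert (Hj : forall j, Rabs (x (M + j)%nat - l) <= c ^ j * E + eps / 2).
  { induction j.
    - rewrite Nat.add_0_r. simpl. pose proof (Rabs_pos (x M - l)). unfold E. lra.
    - replace (M + S j)%nat with (S (M + j)) by lia.
      eapply Rle_trans. apply Hrec. unfold M; lia.
      assert (Hdd : d (M + j)%nat <= eps * (1 - c) / 2).
      { specialize (HM0 (M + j)%nat ltac:(unfold M; lia)). unfold R_dist in HM0.
        rewrite Rminus_0_r in HM0. apply Rabs_def2 in HM0. lra. }
      simpl. assert (0 <= c * Rabs (x (M + j)%nat - l)) by (apply Rmult_le_pos; [lra|apply Rabs_pos]).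
      apply Rmult_le_compat_l with (r := c) in IHj; [|lra]. nra. }
  assert (HE : 0 <= E) by apply Rabs_pos.
  destruct (pow_lt_1_zero c ltac:(rewrite Rabs_pos_eq; lra) (eps / (2 * (E + 1)))) as [J HJ].
  { apply Rdiv_lt_0_compat; lra. }
  exists (M + J)%nat. intros n Hn. unfold R_dist.
  replace n with (M + (n - M))%nat by lia.
  eapply Rle_lt_trans. apply Hj.
  specialize (HJ (n - M)%nat ltac:(lia)). rewrite Rabs_pos_eq in HJ by (apply pow_le; lra).
  assert (c ^ (n - M) * E <= eps / (2 * (E + 1)) * E) by (apply Rmult_le_compat_r; lra).
  assert (eps / (2 * (E + 1)) * E < eps / 2).
  { apply Rmult_lt_reg_r with (2 * (E + 1)). lra. field_simplify; nra. }
  lra.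
Qed.

Lemma lim_inv (a c : R) : 0 < a -> is_lim_seq (fun n => c / (INR n + a)) 0.
Proof.
  intro Ha.
  assert (H1 : is_lim_seq (fun n => INR n + a) p_infty).
  { eapply is_lim_seq_plus. apply is_lim_seq_INR. apply is_lim_seq_const. simpl. constructor. }
  apply is_lim_seq_inv in H1; [|discriminate].
  apply (is_lim_seq_scal_l _ c) in H1. simpl in H1. rewrite Rmult_0_r in H1.
  eapply is_lim_seq_ext; [|exact H1]. intro n. simpl. unfold Rdiv. reflexivity.
Qed.

Lemma sqrt2_facts : sqrt 2 * sqrt 2 = 2 /\ 1 <= sqrt 2.
Proof.
  pose proof (sqrt_sqrt 2 ltac:(lra)). pose proof (sqrt_pos 2). split; auto. nra.
Qed.

Lemma D_pos n : 0 < Dd n /\ 3 * Dd n <= Dd (S n).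
Proof.
  induction n.
  - assert (H0 : Dd 0 = 1) by (unfold Dd; simpl; apply T0).
    assert (H1 : Dd 1 = 3).
    { unfold Dd. simpl. rewrite T0, Tin by lia. simpl. field. }
    lra.
  - destruct IHn as [Ha Hb]. split. lra.
    pose proof (Drec n) as H. pose proof (pos_INR n) as Hn. rewrite !S_INR in H.
    set (a := Dd n) in *. set (b := Dd (S n)) in *. set (c := Dd (S (S n))) in *.
    assert (H2 : (INR n + 1 + 1) * (c - 3 * b) >= 0) by nra.
    assert (c - 3 * b >= 0). { destruct (Rle_or_lt 0 (c - 3*b)). lra. nra. } lra.
Qed.

Definition rho n := Dd (S n) / Dd n.
Definition lam := 3 + 2 * sqrt 2.

Lemma rho_ge n : 3 <= rho n.
Proof. unfold rho. destruct (D_pos n). apply Rmult_le_reg_r with (Dd n); auto.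
  field_simplify; lra. Qed.

Lemma rho_rec n : rho (S n) = 6 - / rho n + (-3 + / rho n) / (INR n + 2).
Proof.
  unfold rho. destruct (D_pos n) as [Ha _]. destruct (D_pos (S n)) as [Hb _].
  pose proof (Drec n) as H. pose proof (pos_INR n). rewrite !S_INR in H.
  apply Rmult_eq_reg_r with (Dd (S n) * (INR n + 2)); [|nra].
  field_simplify; try lra.
Qed.

Lemma rho_lim : is_lim_seq rho lam.
Proof.
  destruct sqrt2_facts as [Hs1 Hs2].
  apply (contr rho (fun n => 3 / (INR n + 2)) lam (1/15) 0).
  - lra.
  - intros n _. rewrite rho_rec. pose proof (rho_ge n). pose proof (pos_INR n).
    set (r := rho n) in *.
    assert (HL : 6 - / lam = lam). { unfold lam. apply Rmult_eq_reg_r with (3 + 2 * sqrt 2); [|nra]. field_simplify; nra. }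
    replace (6 - / r + (-3 + / r) / (INR n + 2) - lam)
      with ((r - lam) * / (r * lam) + (-3 + / r) / (INR n + 2)).
    2:{ assert (HL' : 6 - lam = / lam) by lra.
        transitivity ((6 - lam) - / r + (-3 + / r) / (INR n + 2)); [|ring].
        rewrite HL'. field. unfold lam; split; nra. }
    eapply Rle_trans. apply Rabs_triang. apply Rplus_le_compat.
    + rewrite Rabs_mult, Rabs_inv, (Rabs_pos_eq (r * lam)) by (unfold lam; nra).
      rewrite Rmult_comm. apply Rmult_le_compat_r. apply Rabs_pos.
      replace (1/15) with (/ 15) by field. apply Rinv_le_contravar. lra. unfold lam; nra.
    + rewrite Rabs_div by lra. rewrite (Rabs_pos_eq (INR n + 2)) by lra.
      unfold Rdiv. apply Rmult_le_compat_r. apply Rlt_le, Rinv_0_lt_compat; lra.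
      apply Rabs_le. assert (0 < / r <= / 3). { split. apply Rinv_0_lt_compat; lra.
        apply Rinv_le_contravar; lra. } lra.
  - apply lim_inv. lra.
Qed.

Definition sq n := (2*INR n + 1) * Rseq n / Dd n.
Definition qq n := (2*INR n + 3) / (2*INR n + 1).
Definition alpha n := qq n * qq n * / rho n.
Definition beta n := qq n * (1 + / rho n).

Lemma sq_rec n : sq (S n) = alpha n * sq n + beta n.
Proof.
  unfold sq, alpha, beta, qq, rho. destruct (D_pos n) as [Ha _]. destruct (D_pos (S n)) as [Hb _].
  pose proof (Rrel n) as H. pose proof (pos_INR n). rewrite S_INR.
  replace (2 * (INR n + 1) + 1) with (2 * INR n + 3) by ring.
  apply Rmult_eq_reg_r with (2 * INR n + 1); [|lra].
  replace ((2 * INR n + 3) * Rseq (S n) / Dd (S n) * (2 * INR n + 1))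
    with ((2 * INR n + 3) * ((2 * INR n + 1) * Rseq (S n)) / Dd (S n)) by (field; lra).
  rewrite H. field. repeat split; lra.
Qed.

Lemma qq_lim : is_lim_seq qq 1.
Proof.
  pose proof (lim_inv (1/2) 1 ltac:(lra)) as H.
  apply (is_lim_seq_plus' (fun _ => 1)) with (l1 := 1) in H; [|apply is_lim_seq_const].
  rewrite Rplus_0_r in H. eapply is_lim_seq_ext; [|exact H].
  intro n. unfold qq. pose proof (pos_INR n). field. lra.
Qed.

Lemma sq_lim : is_lim_seq sq (sqrt 2).
Proof.
  destruct sqrt2_facts as [Hs1 Hs2].
  assert (Hlam : 5 <= lam) by (unfold lam; lra).
  apply (contr sq (fun n => Rabs (alpha n * sqrt 2 + beta n - sqrt 2)) (sqrt 2) (25/27) 1).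
  - lra.
  - intros n Hn. rewrite sq_rec.
    replace (alpha n * sq n + beta n - sqrt 2) with (alpha n * (sq n - sqrt 2) + (alpha n * sqrt 2 + beta n - sqrt 2)) by ring.
    eapply Rle_trans. apply Rabs_triang. apply Rplus_le_compat_r.
    rewrite Rabs_mult. apply Rmult_le_compat_r. apply Rabs_pos.
    pose proof (rho_ge n). assert (1 <= INR n) by (apply (le_INR 1); lia).
    assert (Hq : 0 <= qq n <= 5/3).
    { unfold qq. split. apply Rdiv_le_0_compat; lra.
      apply Rmult_le_reg_r with (2 * INR n + 1). lra. field_simplify; lra. }
    assert (0 < / rho n <= / 3). { split. apply Rinv_0_lt_compat; lra. apply Rinv_le_contravar; lra. }
    unfold alpha. rewrite Rabs_pos_eq by (apply Rmult_le_pos; [apply Rmult_le_pos|]; lra).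
    assert (qq n * qq n <= 25/9) by nra. nra.
  - assert (Hl : is_lim_seq (fun n => alpha n * sqrt 2 + beta n - sqrt 2)
              (1 * 1 * / lam * sqrt 2 + 1 * (1 + / lam) - sqrt 2)).
    { apply is_lim_seq_minus'; [|apply is_lim_seq_const].
      pose proof rho_lim as Hr. apply is_lim_seq_inv in Hr; [|unfold lam; intro E; injection E; lra].
      simpl in Hr.
      apply is_lim_seq_plus'.
      + apply is_lim_seq_mult'; [|apply is_lim_seq_const].
        apply is_lim_seq_mult'; [|exact Hr]. apply is_lim_seq_mult'; apply qq_lim.
      + apply is_lim_seq_mult'. apply qq_lim. apply is_lim_seq_plus'. apply is_lim_seq_const. exact Hr. }
    replace (1 * 1 * / lam * sqrt 2 + 1 * (1 + / lam) - sqrt 2) with 0 in Hl.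
    2:{ unfold lam. apply Rmult_eq_reg_r with (3 + 2 * sqrt 2); [|nra]. field_simplify; [nra|nra]. }
    apply is_lim_seq_abs in Hl. simpl in Hl. rewrite Rabs_R0 in Hl. exact Hl.
Qed.

Theorem theorem4p2 :
  is_lim_seq (fun n : nat => Rseq (S n) / Rseq n) (3 + 2 * sqrt 2).
Proof.
  destruct sqrt2_facts as [Hs1 Hs2].
  assert (Hmain : is_lim_seq (fun n => sq (S n) / sq n * rho n * / qq n) (sqrt 2 / sqrt 2 * lam * / 1)).
  { apply is_lim_seq_mult'. apply is_lim_seq_mult'.
    apply is_lim_seq_div'. apply (is_lim_seq_incr_1 sq). apply sq_lim. apply sq_lim. lra.
    apply rho_lim.
    pose proof qq_lim as H. apply is_lim_seq_inv in H; [|intro E; injection E; lra]. exact H. }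
  replace (sqrt 2 / sqrt 2 * lam * / 1) with (3 + 2 * sqrt 2) in Hmain by (unfold lam; field; lra).
  eapply is_lim_seq_ext; [|exact Hmain]. intro n. simpl.
  unfold sq, rho, qq. destruct (D_pos n) as [Ha _]. destruct (D_pos (S n)) as [Hb _].
  pose proof (pos_INR n). rewrite S_INR.
  destruct (Req_dec (Rseq n) 0) as [Hz|Hz].
  - rewrite Hz. unfold Rdiv. rewrite !Rmult_0_r, Rmult_0_l, Rinv_0, !Rmult_0_r, !Rmult_0_l. reflexivity.
  - field. repeat split; lra.
Qed.
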